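(* Let $\mathcal{B}$ be a $\sigma$-algebra on a nonempty set $E$ and let $\nu$ be a $\sigma$-principal $\sigma$-maxitive measure on $\mathcal{B}$. Then $\nu$ is autocontinuous. Moreover, if the empty set is the only $\nu$-negligible subset of $E$, then $\nu$ is completely maxitive and has a cardinal density (a map $c:E\to[0,\infty]$ with $\nu(B)=\sup_{x\in B}c(x)$ for all $B\in\mathcal{B}$).
   Context: A $\sigma$-maxitive measure on $\mathcal{B}$ is a map $\nu:\mathcal{B}\to[0,\infty]$ with $\nu(\emptyset)=0$, $\nu(B\cup B')=\max(\nu(B),\nu(B'))$, and $\nu(\bigcup_nB_n)=\lim_n\nu(B_n)$ for nondecreasing sequences in $\mathcal{B}$. It is completely maxitive if $\nu(\bigcup_{j\in J}B_j)=\sup_{j\in J}\nu(B_j)$ for every arbitrary family $(B_j)_{j\in J}$ in $\mathcal{B}$ with $\bigcup_jB_j\in\mathcal{B}$. A subset $N\subset E$ is $\nu$-negligible if $N\subset G$ for some $G\in\mathcal{B}$ with $\nu(G)=0$. A $\sigma$-ideal of $\mathcal{B}$ is a nonempty $\mathcal{I}\subset\mathcal{B}$ closed under countable unions and under taking subsets belonging to $\mathcal{B}$; $\nu$ is $\sigma$-principal if for every $\sigma$-ideal $\mathcal{I}$ there is $L\in\mathcal{I}$ with $S\setminus L$ $\nu$-negligible for all $S\in\mathcal{I}$. $\nu$ is autocontinuous if there is a $\mathcal{B}$-measurable $f:E\to[0,\infty]$ (i.e. $\{f>t\}\in\mathcal{B}$ for all $t\ge0$) with $\nu(B)=\inf\{t>0:B\cap\{f>t\}\text{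 is }\nu\text{-negligible}\}$ for all $B\in\mathcal{B}$. *)

(* Defs.v *)
From HB Require Import structures.
From mathcomp Require Import all_boot all_order all_algebra.
From mathcomp Require Import all_classical all_reals all_analysis.
Set Implicit Arguments. Unset Strict Implicit. Unset Printing Implicit Defensive.
Import Order.TTheory GRing.Theory Num.Theory.
Local Open Scope classical_set_scope.
Local Open Scope ring_scope.
Local Open Scope ereal_scope.

Section Maxitive.
Context (d : measure_display) (T : measurableType d) (R : realType).
Implicit Types (nu : set T -> \bar R).

(* Supremum in [0, +oo]: the supremum of the empty family is 0. *)
Definition sup0 (S : set (\bar R)) : \bar R := ereal_sup ([set 0] `|` S).

(* nu : B -> [0,oo], sigma-maxitive; only values on measurable sets matter *)
Definition sigma_maxitive nu : Prop :=
  [/\ (forall B, measurable B -> 0 <= nu B),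
      nu set0 = 0,
      (forall B B', measurable B -> measurable B' ->
         nu (B `|` B') = maxe (nu B) (nu B')) &
      (forall Bn : nat -> set T, (forall n, measurable (Bn n)) ->
         (forall n, Bn n `<=` Bn n.+1) ->
         (nu \o Bn) @ \oo --> nu (\bigcup_n Bn n))].

Definition completely_maxitive nu : Prop :=
  forall (J : Type) (Bj : J -> set T), (forall j, measurable (Bj j)) ->
    measurable (\bigcup_j Bj j) ->
    nu (\bigcup_j Bj j) = sup0 [set nu (Bj j) | j in setT].

Definition nu_negligible nu (N : set T) : Prop :=
  exists G, [/\ measurable G, nu G = 0 & N `<=` G].

Definition sigma_ideal (I : set (set T)) : Prop :=
  [/\ I !=set0,
      I `<=` measurable,
      (forall F : nat -> set T, (forall n, I (F n)) -> I (\bigcup_n F n)) &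
      (forall S S', I S -> measurable S' -> S' `<=` S -> I S')].

Definition sigma_principal nu : Prop :=
  forall I, sigma_ideal I ->
    exists2 L, I L & forall S, I S -> nu_negligible nu (S `\` L).

Definition autocontinuous nu : Prop :=
  exists f : T -> \bar R,
    [/\ (forall x, 0 <= f x),
        (forall t : R, (0 <= t)%R -> measurable [set x | t%:E < f x]) &
        (forall B, measurable B ->
           nu B = ereal_inf [set t%:E | t in
                    [set t : R | (0 < t)%R /\
                       nu_negligible nu (B `&` [set x | t%:E < f x])]])].

Definition has_cardinal_density nu : Prop :=
  exists c : T -> \bar R, (forall x, 0 <= c x) /\
    forall B, measurable B -> nu B = sup0 [set c x | x in B].

End Maxitive.

(* Main.v *)
Require Import Defs.
From HB Require Import structures.
From mathcomp Require Import all_boot all_order all_algebra.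
From mathcomp Require Import all_classical all_reals all_analysis.
Set Implicit Arguments. Unset Strict Implicit. Unset Printing Implicit Defensive.
Import Order.TTheory GRing.Theory Num.Theory.
Local Open Scope classical_set_scope.
Local Open Scope ring_scope.
Local Open Scope ereal_scope.

Section Proofs.
Context (d : measure_display) (T : measurableType d) (R : realType)
  (nu : set T -> \bar R) (Hm : sigma_maxitive nu).

Lemma nu_ge0 B : measurable B -> 0 <= nu B.
Proof. by case: Hm => h _ _ _; exact: h. Qed.

Lemma nu_mono A B : measurable A -> measurable B -> A `<=` B -> nu A <= nu B.
Proof.
move=> mA mB AB; case: Hm => _ _ hU _.
have <- : A `|` B = B by apply/setUidPr.
by rewrite hU // le_max lexx.
Qed.

Definition It (t : R) : set (set T) := [set S | measurable S /\ nu S <= t%:E].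

Fixpoint pu (F : nat -> set T) n := match n with 0 => F 0%N | m.+1 => pu F m `|` F m.+1 end.

Lemma It_nat t (F : nat -> set T) : (forall n, It t (F n)) -> It t (\bigcup_n F n).
Proof.
move=> hF; case: Hm => _ _ hU hC.
have mpu : forall n, measurable (pu F n).
  by elim=> [|n IH] /=; [case: (hF 0%N)|apply: measurableU => //; case: (hF n.+1)].
have nupu : forall n, nu (pu F n) <= t%:E.
  elim=> [|n IH] /=; first by case: (hF 0%N).
  by rewrite hU //; [rewrite ge_max IH; case: (hF n.+1) => _ ->|case: (hF n.+1)].
have eq : \bigcup_n pu F n = \bigcup_n F n.
  apply/seteqP; split => x [n _].
    elim: n => [|n IH] /=; first by exists 0%N.
    by case; [exact: IH | exists n.+1].
  by move=> Fx; exists n => //; case: n Fx => [|n] Fx //=; right.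
have := hC (pu F) mpu (fun n x px => or_introl px).
rewrite eq => hcv; split.
  by apply: bigcup_measurable => k _; case: (hF k).
by apply: (cvge_to_le hcv); apply: nearW => n /=.
Qed.

Lemma It_ideal t : (0 <= t)%R -> sigma_ideal (It t).
Proof.
move=> t0; split.
- by exists set0; split => //; case: Hm => _ -> _ _; rewrite lee_fin.
- by move=> S [].
- exact: It_nat.
- move=> S S' [mS hS] mS' sub; split => //.
  exact: le_trans (nu_mono mS' mS sub) hS.
Qed.

Lemma It_bigcup t (P : set nat) (F : nat -> set T) : (0 <= t)%R ->
  (forall k, P k -> It t (F k)) -> It t (\bigcup_(k in P) F k).
Proof.
move=> t0 hF.
pose G k := if `[< P k >] then F k else set0.
have -> : \bigcup_(k in P) F k = \bigcup_k G k.
  apply/seteqP; split => x [k Pk Fx].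
    by exists k => //; rewrite /G; case: asboolP.
  by move: Fx; rewrite /G; case: asboolP => // Pk' Fx; exists k.
apply: It_nat => k; rewrite /G; case: asboolP => [/hF //|_].
have [[S IS] _ _ h] := It_ideal t0; exact: (h S set0 IS measurable0 (@sub0set _ S)).
Qed.

Definition q (n : nat) : R := `| ratr (odflt 0%R (unpickle n)) |%R.

Lemma q_ge0 n : (0 <= q n)%R.
Proof. exact: normr_ge0. Qed.

Lemma q_dense t e : (0 <= t)%R -> (0 < e)%R -> exists n, (t < q n < t + e)%R.
Proof.
move=> t0 e0; have te : (t < t + e)%R by rewrite ltrDl.
have [r] := @rat_in_itvoo R t (t + e) te.
rewrite in_itv /= => /andP[h1 h2]; exists (pickle r).
rewrite /q pickleK /= ger0_norm; first by rewrite h1 h2.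
exact: (le_trans t0 (ltW h1)).
Qed.

Lemma dens (y : \bar R) t : (0 <= t)%R ->
  (forall n, (t < q n)%R -> y <= (q n)%:E) -> y <= t%:E.
Proof.
move=> t0 h; apply/lee_addgt0Pr => e e0.
have [n /andP[h1 h2]] := q_dense t0 e0.
by apply: le_trans (h n h1) _; rewrite -EFinD lee_fin ltW.
Qed.

End Proofs.

Section Auto.
Context (d : measure_display) (T : measurableType d) (R : realType)
  (nu : set T -> \bar R) (Hm : sigma_maxitive nu) (Hp : sigma_principal nu).

Local Notation qq := (q R).

Lemma exL n : exists L, It nu (qq n) L /\
  (forall S, It nu (qq n) S -> nu_negligible nu (S `\` L)).
Proof. have [L IL h] := Hp (It_ideal Hm (q_ge0 R n)). by exists L. Qed.

Definition L n := projT1 (choice exL) n.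
Lemma LP n : It nu (qq n) (L n) /\
  (forall S, It nu (qq n) S -> nu_negligible nu (S `\` L n)).
Proof. exact: (projT2 (choice exL) n). Qed.

Definition M n := \bigcup_(k in [set k | (qq k <= qq n)%R]) L k.

Lemma M_It n : It nu (qq n) (M n).
Proof.
apply: (It_bigcup Hm (q_ge0 R n)) => k /= hk; have [[mL hL] _] := LP k.
by split => //; apply: le_trans hL _; rewrite lee_fin.
Qed.

Lemma M_meas n : measurable (M n).
Proof. exact: (M_It n).1. Qed.

Lemma M_mono n m : (qq n <= qq m)%R -> M n `<=` M m.
Proof. by move=> h x [k hk Lx]; exists k => //; exact: le_trans hk h. Qed.

Lemma L_M n : L n `<=` M n.
Proof. by move=> x Lx; exists n => //=. Qed.

Definition f x := ereal_inf [set (qq n)%:E | n in [set n | M n x]].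

Lemma f_ge0 x : 0 <= f x.
Proof. by apply: le_ereal_inf_tmp => _ [n _ <-]; rewrite lee_fin q_ge0. Qed.

Lemma f_le n x : M n x -> f x <= (qq n)%:E.
Proof. by move=> h; apply: ereal_inf_lbound; exists n. Qed.

Lemma fleP x t : (0 <= t)%R -> f x <= t%:E <-> (forall n, (t < qq n)%R -> M n x).
Proof.
move=> t0; split.
- move=> h n tn; have : f x < (qq n)%:E by apply: le_lt_trans h _; rewrite lte_fin.
  move=> /ereal_inf_lt [_ [m Mm <-]]; rewrite lte_fin => mn.
  exact: M_mono (ltW mn) _ Mm.
- by move=> h; apply: (@dens R (f x) t t0) => n tn; exact: f_le (h n tn).
Qed.

Lemma f_meas t : (0 <= t)%R -> measurable [set x | t%:E < f x].
Proof.
move=> t0.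
have -> : [set x | t%:E < f x] = ~` \bigcap_(n in [set n | (t < qq n)%R]) M n.
  apply/seteqP; split => x /=.
  - rewrite ltNge => /negP h hc; apply: h; apply/(fleP x t0) => n tn; exact: hc n tn.
  - move=> h; rewrite ltNge; apply/negP => /(fleP x t0) h'; apply: h => n tn; exact: h' n tn.
apply: measurableC; apply: bigcap_measurable.
  by have [n /andP[h _]] := q_dense t0 (@ltr01 R); exists n.
by move=> k _; exact: M_meas.
Qed.

Lemma nu_eq B : measurable B -> nu B = ereal_inf [set t%:E | t in
   [set t : R | (0 < t)%R /\ nu_negligible nu (B `&` [set x | t%:E < f x])]].
Proof.
move=> mB; apply/eqP; rewrite eq_le; apply/andP; split.
- apply: le_ereal_inf_tmp => _ [t [t0 [G [mG G0 sub]]] <-].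
  have t0' : (0 <= t)%R := ltW t0.
  set C := B `&` ~` [set x | t%:E < f x].
  have mC : measurable C by apply: measurableI => //; apply: measurableC; exact: f_meas.
  have BGC : B `<=` G `|` C.
    move=> x Bx; have [h|h] := pselect (t%:E < f x); [left; exact: sub|right; split => //].
  have mGC : measurable (G `|` C) by exact: measurableU.
  apply: (le_trans (nu_mono Hm mB mGC BGC)).
  case: Hm => _ _ hU _; rewrite hU // G0 ge_max lee_fin t0' /=.
  apply: (@dens R (nu C) t t0') => n tn.
  apply: le_trans (nu_mono Hm mC (M_meas n) _) (M_It n).2.
  move=> x [Bx nf]; apply: (proj1 (fleP x t0') _ n tn).
  by rewrite leNgt; apply/negP; exact: nf.
- have nB0 := nu_ge0 Hm mB.
  case E: (nu B) => [b| |]; last by rewrite E in nB0.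
    have b0 : (0 <= b)%R by rewrite -lee_fin -E.
    apply/lee_addgt0Pr => e e0.
    have [n /andP[h1 h2]] := q_dense b0 e0.
    apply: (@le_trans _ _ (qq n)%:E); last by rewrite -EFinD lee_fin ltW.
    apply: ereal_inf_lbound; exists (qq n) => //; split; first exact: le_lt_trans b0 h1.
    have [_ hL] := LP n.
    have IB : It nu (qq n) B by split => //; rewrite E lee_fin ltW.
    have [G [mG G0 sub]] := hL B IB.
    exists G; split => // x [Bx fx]; apply: sub; split => // Lx.
    by move: (f_le (L_M Lx)); rewrite leNgt fx.
  by rewrite leey.
Qed.

Lemma dens_eq : (forall N : set T, nu_negligible nu N -> N = set0) ->
  forall B, measurable B -> nu B = Defs.sup0 [set f x | x in B].
Proof.
move=> H0 B mB; rewrite nu_eq //; apply/eqP; rewrite eq_le; apply/andP; split.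
- set s := (X in _ <= X).
  have s0 : 0 <= s by apply: ereal_sup_ubound; left.
  case Es: s => [y| |]; last by rewrite Es in s0.
    have y0 : (0 <= y)%R by rewrite -lee_fin -Es.
    apply/lee_addgt0Pr => e e0; apply: ereal_inf_lbound; exists (y + e)%R; last by rewrite EFinD.
    split; first by apply: (le_lt_trans y0); rewrite ltrDl.
    exists set0; split => //; first by case: Hm.
    move=> x [Bx]; rewrite /= ltNge => /negP; apply.
    apply: (@le_trans _ _ s); first by apply: ereal_sup_ubound; right; exists x.
    by rewrite Es lee_fin lerDl ltW.
  by rewrite leey.
- apply: le_ereal_inf_tmp => _ [t [t0 hn] <-].
  apply: ge_ereal_sup => _ [->|[x Bx <-]]; first by rewrite lee_fin ltW.
  rewrite leNgt; apply/negP => h.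
  have : (B `&` [set x | t%:E < f x]) x by [].
  by rewrite (H0 _ hn).
Qed.

End Auto.

Theorem corollary5p7 (d : measure_display) (T : measurableType d) (R : realType)
  (nu : set T -> \bar R) :
  (exists x : T, True) ->
  sigma_maxitive nu -> sigma_principal nu ->
  autocontinuous nu /\
  ((forall N : set T, nu_negligible nu N -> N = set0) ->
     completely_maxitive nu /\ has_cardinal_density nu).
Proof.
move=> _ Hm Hp; split.
  exists (f Hm Hp); split; [exact: f_ge0 | exact: f_meas | exact: nu_eq].
move=> H0; have de := dens_eq Hm Hp H0; split; last first.
  by exists (f Hm Hp); split; [exact: f_ge0 | exact: de].
move=> J Bj mB mU; rewrite de //; apply/eqP; rewrite eq_le; apply/andP; split.
- apply: ge_ereal_sup => _ [->|[x [j _ Bx] <-]]; first by apply: ereal_sup_ubound; left.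
  apply: (@le_trans _ _ (nu (Bj j))).
    by rewrite de //; apply: ereal_sup_ubound; right; exists x.
  by apply: ereal_sup_ubound; right; exists j.
- apply: ge_ereal_sup => _ [->|[j _ <-]]; first by apply: ereal_sup_ubound; left.
  rewrite de //; apply: ge_ereal_sup => _ [->|[x Bx <-]]; first by apply: ereal_sup_ubound; left.
  by apply: ereal_sup_ubound; right; exists x => //; exists j.
Qed.
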